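(* Let $K\subset\mathbb R^2$ be a triangle (resp. an axis-parallel rectangle) and let $k\ge 1$. For every $u\in P_k(K)$ (resp. $u\in Q_k(K)$) there exists $\varphi_u\in P_{k+1}(K)$ (resp. $\varphi_u\in Q_{k+1}(K)$) such that, for every edge $e$ of $K$ with unit tangent vector $\bm\tau_e$, the function $(\mathfrak p u-\nabla\varphi_u)\cdot\bm\tau_e$ is constant on $e$.
   Context: $P_i(K)$ denotes the polynomials of total degree at most $i$ on $K$; $Q_{i}(K)$ the polynomials of degree at most $i$ in each of $x_1$ and $x_2$. With $\bm x=(x_1,x_2)^T$ and $\bm x^\perp=(-x_2,x_1)^T$, the Poincaré operator (with origin at $0\in\mathbb R^2$) is $(\mathfrak p u)(\bm x)=\int_0^1 t\,\bm x^\perp\,u(t\bm x)\,dt$, which maps scalar functions to vector fields. *)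

(* Defs.v *)
From Stdlib Require Import Reals List.
From Coquelicot Require Import Coquelicot.
Open Scope R_scope.

Definition pt := (R * R)%type.

Definition dot (v w : pt) : R := fst v * fst w + snd v * snd w.

Definition inP (k : nat) (f : pt -> R) : Prop :=
  exists c : nat -> nat -> R, forall x1 x2 : R,
    f (x1, x2) = sum_f_R0 (fun i => sum_f_R0 (fun j => c i j * x1 ^ i * x2 ^ j) (k - i)) k.

Definition inQ (k : nat) (f : pt -> R) : Prop :=
  exists c : nat -> nat -> R, forall x1 x2 : R,
    f (x1, x2) = sum_f_R0 (fun i => sum_f_R0 (fun j => c i j * x1 ^ i * x2 ^ j) k) k.

(* Poincare operator with origin 0:  (p u)(x) = int_0^1 t x^perp u(t x) dt,
   x^perp = (-x2, x1). *)
Definition poincare (u : pt -> R) (x : pt) : pt :=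
  (RInt (fun t => t * (- snd x) * u (t * fst x, t * snd x)) 0 1,
   RInt (fun t => t * fst x * u (t * fst x, t * snd x)) 0 1).

Definition grad (phi : pt -> R) (x : pt) : pt :=
  (Derive (fun s => phi (s, snd x)) (fst x),
   Derive (fun s => phi (fst x, s)) (snd x)).

Definition seg_pt (a b : pt) (s : R) : pt :=
  (fst a + s * (fst b - fst a), snd a + s * (snd b - snd a)).

Definition unit_tangent (a b : pt) : pt :=
  let l := sqrt ((fst b - fst a) ^ 2 + (snd b - snd a) ^ 2) in
  ((fst b - fst a) / l, (snd b - snd a) / l).

Definition tangential_const_on_edge (w : pt -> pt) (e : pt * pt) : Prop :=
  exists C : R, forall s : R, 0 <= s <= 1 ->
    dot (w (seg_pt (fst e) (snd e) s)) (unit_tangent (fst e) (snd e)) = C.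

Definition nondegenerate_triangle (a b c : pt) : Prop :=
  (fst b - fst a) * (snd c - snd a) - (snd b - snd a) * (fst c - fst a) <> 0.

Definition triangle_edges (a b c : pt) : list (pt * pt) :=
  (a, b) :: (b, c) :: (c, a) :: nil.

Definition rectangle_edges (x0 x1 y0 y1 : R) : list (pt * pt) :=
  ((x0, y0), (x1, y0)) :: ((x1, y0), (x1, y1)) ::
  ((x1, y1), (x0, y1)) :: ((x0, y1), (x0, y0)) :: nil.

Definition vfsub (v w : pt -> pt) (x : pt) : pt :=
  (fst (v x) - fst (w x), snd (v x) - snd (w x)).

(* Main.v *)
Require Import Defs.
From Stdlib Require Import Reals List Lia Lra Arith.
From Coquelicot Require Import Coquelicot.
Open Scope R_scope.


Fixpoint ev (l : list (R * nat * nat)) (x y : R) : R :=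
  match l with nil => 0 | (c, i, j) :: t => c * x ^ i * y ^ j + ev t x y end.

Fixpoint okl (P : nat -> nat -> Prop) (l : list (R * nat * nat)) : Prop :=
  match l with nil => True | (c, i, j) :: t => P i j /\ okl P t end.

Definition ML (P : nat -> nat -> Prop) (f : pt -> R) : Prop :=
  exists l, okl P l /\ forall x y, f (x, y) = ev l x y.

Definition box (m n : nat) : nat -> nat -> Prop := fun i j => (i <= m /\ j <= n)%nat.
Definition tot (n : nat) : nat -> nat -> Prop := fun i j => (i + j <= n)%nat.

Lemma ev_app l1 l2 x y : ev (l1 ++ l2) x y = ev l1 x y + ev l2 x y.
Proof. induction l1 as [|[[c i] j] t IH]; simpl; [ring| rewrite IH; ring]. Qed.

Lemma okl_app P l1 l2 : okl P l1 -> okl P l2 -> okl P (l1 ++ l2).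
Proof. induction l1 as [|[[c i] j] t IH]; simpl; tauto. Qed.

Lemma okl_mono (P Q : nat -> nat -> Prop) l : (forall i j, P i j -> Q i j) -> okl P l -> okl Q l.
Proof. intros H. induction l as [|[[c i] j] t IH]; simpl; auto. intros [? ?]; auto. Qed.

Lemma ML_ext P f g : (forall x y, f (x, y) = g (x, y)) -> ML P f -> ML P g.
Proof. intros H [l [Hl He]]. exists l; split; auto. intros; rewrite <- H; auto. Qed.

Lemma ML_mono (P Q : nat -> nat -> Prop) f : (forall i j, P i j -> Q i j) -> ML P f -> ML Q f.
Proof. intros H [l [Hl He]]. exists l; split; auto. eapply okl_mono; eauto. Qed.

Lemma ML_add P f g : ML P f -> ML P g -> ML P (fun z => f z + g z).
Proof.
  intros [l1 [H1 E1]] [l2 [H2 E2]]. exists (l1 ++ l2); split.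
  apply okl_app; auto. intros; rewrite ev_app, E1, E2; auto.
Qed.

Lemma ML_mon P c i j : P i j -> ML P (fun z => c * fst z ^ i * snd z ^ j).
Proof. intros H. exists ((c, i, j) :: nil); simpl; split; auto. intros; ring. Qed.

Lemma ML_zero P : ML P (fun _ => 0).
Proof. exists nil; simpl; split; auto. Qed.

Lemma ML_scale P c f : ML P f -> ML P (fun z => c * f z).
Proof.
  intros [l [Hl E]]. exists (map (fun m => match m with (d, i, j) => (c * d, i, j) end) l).
  split.
  - clear E. revert Hl. induction l as [|[[d i] j] t IH]; simpl; tauto.
  - intros. rewrite E. clear E Hl. induction l as [|[[d i] j] t IH]; simpl; [ring|rewrite <- IH; ring].
Qed.

Lemma ML_mul (P Q S : nat -> nat -> Prop) f g :
  (forall i j p q, P i j -> Q p q -> S (i + p) (j + q))%nat ->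
  ML P f -> ML Q g -> ML S (fun z => f z * g z).
Proof.
  intros HS [l1 [H1 E1]] [l2 [H2 E2]].
  apply ML_ext with (f := fun z => ev l1 (fst z) (snd z) * ev l2 (fst z) (snd z)).
  { intros; simpl; rewrite E1, E2; auto. }
  clear E1 E2. induction l1 as [|[[c i] j] t IH]; simpl in *.
  - apply ML_ext with (f := fun _ => 0). intros; simpl; ring. apply ML_zero.
  - destruct H1 as [Hij Ht].
    apply ML_ext with (f := fun z => c * fst z ^ i * snd z ^ j * ev l2 (fst z) (snd z) +
                                   ev t (fst z) (snd z) * ev l2 (fst z) (snd z)).
    { intros; simpl; ring. }
    apply ML_add; auto. clear IH Ht.
    induction l2 as [|[[d p] q] t2 IH2]; simpl in *.
    + apply ML_ext with (f := fun _ => 0). intros; simpl; ring. apply ML_zero.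
    + destruct H2 as [Hpq Ht2].
      apply ML_ext with (f := fun z => (c * d) * fst z ^ (i + p) * snd z ^ (j + q) +
               c * fst z ^ i * snd z ^ j * ev t2 (fst z) (snd z)).
      { intros; simpl; rewrite !pow_add; ring. }
      apply ML_add; auto. apply ML_mon; auto.
Qed.

Lemma ML_const P c : P 0%nat 0%nat -> ML P (fun _ => c).
Proof. intros H. eapply ML_ext; [|apply (ML_mon P c 0 0 H)]. intros; simpl; ring. Qed.
Lemma ML_x1 P c : P 1%nat 0%nat -> ML P (fun z => c * fst z).
Proof. intros H. eapply ML_ext; [|apply (ML_mon P c 1 0 H)]. intros; simpl; ring. Qed.
Lemma ML_x2 P c : P 0%nat 1%nat -> ML P (fun z => c * snd z).
Proof. intros H. eapply ML_ext; [|apply (ML_mon P c 0 1 H)]. intros; simpl; ring. Qed.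

Lemma ML_pow_box p q A i : ML (box p q) A -> ML (box (i * p) (i * q)) (fun z => A z ^ i).
Proof.
  intros HA. induction i; simpl.
  - apply ML_const. unfold box; lia.
  - eapply ML_mul; [|exact HA|exact IHi]. unfold box; intros; lia.
Qed.

Lemma ML_pow_tot A i : ML (tot 1) A -> ML (tot i) (fun z => A z ^ i).
Proof.
  intros HA. induction i; simpl.
  - apply ML_const. unfold tot; lia.
  - eapply ML_mul; [|exact HA|exact IHi]. unfold tot; intros; lia.
Qed.

Lemma ML_comp_gen P Q F A B :
  ML P F -> (forall i j, P i j -> ML Q (fun z => A z ^ i * B z ^ j)) ->
  ML Q (fun z => F (A z, B z)).
Proof.
  intros [l [Hl E]] HM.
  apply ML_ext with (f := fun z => ev l (A z) (B z)). { intros; rewrite E; auto. }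
  clear E. induction l as [|[[c i] j] t IH]; simpl in *.
  - apply ML_zero.
  - destruct Hl as [H1 H2]. apply ML_add; auto.
    apply ML_ext with (f := fun z => c * (A z ^ i * B z ^ j)). { intros; simpl; ring. }
    apply ML_scale; auto.
Qed.

Lemma ML_comp_box P F A B p1 q1 p2 q2 m n :
  ML P F -> ML (box p1 q1) A -> ML (box p2 q2) B ->
  (forall i j, P i j -> i * p1 + j * p2 <= m /\ i * q1 + j * q2 <= n)%nat ->
  ML (box m n) (fun z => F (A z, B z)).
Proof.
  intros HF HA HB H. apply (ML_comp_gen P); auto. intros i j Hij.
  eapply ML_mul; [| apply (ML_pow_box _ _ _ i HA) | apply (ML_pow_box _ _ _ j HB)].
  unfold box; intros; specialize (H _ _ Hij). lia.
Qed.

Lemma ML_comp_tot P F A B n :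
  ML P F -> ML (tot 1) A -> ML (tot 1) B ->
  (forall i j, P i j -> i + j <= n)%nat ->
  ML (tot n) (fun z => F (A z, B z)).
Proof.
  intros HF HA HB H. apply (ML_comp_gen P); auto. intros i j Hij.
  eapply ML_mul; [| apply (ML_pow_tot _ i HA) | apply (ML_pow_tot _ j HB)].
  unfold tot; intros; specialize (H _ _ Hij). lia.
Qed.

Definition inG (B : nat -> nat) (n : nat) (f : pt -> R) : Prop :=
  exists c : nat -> nat -> R, forall x1 x2 : R,
    f (x1, x2) = sum_f_R0 (fun i => sum_f_R0 (fun j => c i j * x1 ^ i * x2 ^ j) (B i)) n.

Lemma sum_ML P (F : nat -> pt -> R) N :
  (forall i, (i <= N)%nat -> ML P (F i)) -> ML P (fun z => sum_f_R0 (fun i => F i z) N).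
Proof.
  induction N; intros H; simpl.
  - apply H; lia.
  - apply ML_add; [apply IHN; intros; apply H; lia | apply H; lia].
Qed.

Lemma inG_ML B n f : inG B n f -> ML (fun i j => i <= n /\ j <= B i)%nat f.
Proof.
  intros [c Hc].
  apply ML_ext with (f := fun z => sum_f_R0 (fun i => sum_f_R0 (fun j => c i j * fst z ^ i * snd z ^ j) (B i)) n).
  { intros; simpl; rewrite Hc; auto. }
  apply sum_ML; intros i Hi. apply (sum_ML _ (fun j z => c i j * fst z ^ i * snd z ^ j)).
  intros j Hj. apply ML_mon. lia.
Qed.

Lemma sum0 N : sum_f_R0 (fun _ => 0) N = 0.
Proof. induction N; simpl; [auto| rewrite IHN; ring]. Qed.

Lemma delta_sum (F : nat -> R) i N :
  sum_f_R0 (fun p => if Nat.eqb p i then F p else 0) N = if Nat.leb i N then F i else 0.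
Proof.
  induction N.
  - simpl; destruct i; simpl; auto.
  - rewrite tech5, IHN. destruct (Nat.eqb_spec (S N) i).
    + subst. replace (Nat.leb (S N) N) with false by (symmetry; apply Nat.leb_gt; lia).
      rewrite Nat.leb_refl. ring.
    + destruct (Nat.leb_spec i N); destruct (Nat.leb_spec i (S N)); try lia; ring.
Qed.

Lemma inG_mon B n c i j : (i <= n)%nat -> (j <= B i)%nat ->
  inG B n (fun z => c * fst z ^ i * snd z ^ j).
Proof.
  intros Hi Hj.
  exists (fun p q => if andb (Nat.eqb p i) (Nat.eqb q j) then c else 0).
  intros x y; simpl.
  rewrite (sum_eq _ (fun p => if Nat.eqb p i then
       sum_f_R0 (fun q => if Nat.eqb q j then c * x ^ p * y ^ q else 0) (B p) else 0)).
  2:{ intros p _. destruct (Nat.eqb p i).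
      - apply sum_eq; intros q _; simpl. destruct (Nat.eqb q j); ring.
      - rewrite (sum_eq _ (fun _ => 0)); [apply sum0|]. intros; simpl; ring. }
  rewrite delta_sum. replace (Nat.leb i n) with true by (symmetry; apply Nat.leb_le; auto).
  rewrite (delta_sum (fun q => c * x ^ i * y ^ q)).
  replace (Nat.leb j (B i)) with true by (symmetry; apply Nat.leb_le; auto). auto.
Qed.

Lemma inG_add B n f g : inG B n f -> inG B n g -> inG B n (fun z => f z + g z).
Proof.
  intros [c1 H1] [c2 H2]. exists (fun i j => c1 i j + c2 i j). intros x y.
  rewrite H1, H2, <- sum_plus. apply sum_eq; intros i _.
  rewrite <- sum_plus. apply sum_eq; intros; ring.
Qed.

Lemma inG_ext B n f g : (forall x y, f (x, y) = g (x, y)) -> inG B n f -> inG B n g.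
Proof. intros H [c Hc]. exists c. intros; rewrite <- H; auto. Qed.

Lemma ML_inG B n f : ML (fun i j => i <= n /\ j <= B i)%nat f -> inG B n f.
Proof.
  intros [l [Hl E]]. apply inG_ext with (f := fun z => ev l (fst z) (snd z)).
  { intros; rewrite E; auto. }
  clear E. induction l as [|[[c i] j] t IH]; simpl in *.
  - exists (fun _ _ => 0). intros; simpl. rewrite (sum_eq _ (fun _ => 0)); [symmetry; apply sum0|].
    intros. rewrite (sum_eq _ (fun _ => 0)); [apply sum0|]. intros; ring.
  - destruct Hl as [[Hi Hj] Ht].
    apply (inG_add B n (fun z => c * fst z ^ i * snd z ^ j) (fun z => ev t (fst z) (snd z))).
    apply inG_mon; auto. auto.
Qed.

Lemma inP_ML n f : inP n f -> ML (tot n) f.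
Proof.
  intros H. change (inG (fun i => n - i)%nat n f) in H. apply inG_ML in H.
  eapply ML_mono; [|exact H]. unfold tot; intros; lia.
Qed.

Lemma ML_inP n f : ML (tot n) f -> inP n f.
Proof.
  intros H. change (inG (fun i => n - i)%nat n f). apply ML_inG.
  eapply ML_mono; [|exact H]. unfold tot; intros; lia.
Qed.

Lemma inQ_ML n f : inQ n f -> ML (box n n) f.
Proof.
  intros H. change (inG (fun _ => n)%nat n f) in H. apply inG_ML in H. exact H.
Qed.

Lemma ML_inQ n f : ML (box n n) f -> inQ n f.
Proof.
  intros H. change (inG (fun _ => n)%nat n f). apply ML_inG. exact H.
Qed.

Lemma isd_plus f g x a b : is_derive f x a -> is_derive g x b ->
  is_derive (fun t => f t + g t) x (a + b).
Proof. intros; apply (is_derive_plus f g x a b); auto. Qed.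

Lemma isd_ext (f g : R -> R) x l : (forall t, f t = g t) -> is_derive f x l -> is_derive g x l.
Proof. apply is_derive_ext. Qed.

Fixpoint d1 (l : list (R * nat * nat)) (x y : R) : R :=
  match l with nil => 0 | (c, i, j) :: t => c * (INR i * x ^ pred i) * y ^ j + d1 t x y end.
Fixpoint d2 (l : list (R * nat * nat)) (x y : R) : R :=
  match l with nil => 0 | (c, i, j) :: t => c * x ^ i * (INR j * y ^ pred j) + d2 t x y end.

Lemma ev_d1 l x y : is_derive (fun t => ev l t y) x (d1 l x y).
Proof.
  induction l as [|[[c i] j] t IH]; simpl.
  - apply (is_derive_const 0 x).
  - apply isd_plus; auto. auto_derive; auto. ring.
Qed.

Lemma ev_d2 l x y : is_derive (fun t => ev l x t) y (d2 l x y).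
Proof.
  induction l as [|[[c i] j] t IH]; simpl.
  - apply (is_derive_const 0 y).
  - apply isd_plus; auto. auto_derive; auto. ring.
Qed.

Lemma ev_path l a1 a2 e1 e2 s :
  is_derive (fun s => ev l (a1 + s * e1) (a2 + s * e2)) s
    (e1 * d1 l (a1 + s * e1) (a2 + s * e2) + e2 * d2 l (a1 + s * e1) (a2 + s * e2)).
Proof.
  induction l as [|[[c i] j] t IH]; simpl.
  - replace (e1 * 0 + e2 * 0) with 0 by ring. apply (is_derive_const 0 s).
  - eapply is_derive_ext with (f := fun s => c * (a1 + s * e1) ^ i * (a2 + s * e2) ^ j +
        ev t (a1 + s * e1) (a2 + s * e2)). { intros; auto. }
    replace (e1 * (c * (INR i * (a1 + s * e1) ^ Init.Nat.pred i) * (a2 + s * e2) ^ j + d1 t (a1 + s * e1) (a2 + s * e2)) +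
      e2 * (c * (a1 + s * e1) ^ i * (INR j * (a2 + s * e2) ^ Init.Nat.pred j) + d2 t (a1 + s * e1) (a2 + s * e2)))
    with ((c * (INR i * e1 * (a1 + s * e1) ^ pred i) * (a2 + s * e2) ^ j + c * (a1 + s * e1) ^ i * (INR j * e2 * (a2 + s * e2) ^ pred j)) +
          (e1 * d1 t (a1 + s * e1) (a2 + s * e2) + e2 * d2 t (a1 + s * e1) (a2 + s * e2))) by ring.
    apply isd_plus; auto. auto_derive; auto. ring.
Qed.

Lemma ML_chain P phi : ML P phi -> forall a1 a2 e1 e2 s,
  is_derive (fun s => phi (a1 + s * e1, a2 + s * e2)) s
    (e1 * Derive (fun t => phi (t, a2 + s * e2)) (a1 + s * e1) +
     e2 * Derive (fun t => phi (a1 + s * e1, t)) (a2 + s * e2)).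
Proof.
  intros [l [_ E]] a1 a2 e1 e2 s.
  rewrite (Derive_ext (fun t => phi (t, a2 + s * e2)) (fun t => ev l t (a2 + s * e2))) by (intros; apply E).
  rewrite (Derive_ext (fun t => phi (a1 + s * e1, t)) (fun t => ev l (a1 + s * e1) t)) by (intros; apply E).
  rewrite (is_derive_unique _ _ _ (ev_d1 _ _ _)), (is_derive_unique _ _ _ (ev_d2 _ _ _)).
  eapply is_derive_ext; [|apply ev_path]. intros; simpl; rewrite E; auto.
Qed.

Lemma antider_mon c i j y s :
  is_derive (fun s => c / INR (S i) * s ^ S i * y ^ j) s (c * s ^ i * y ^ j).
Proof.
  assert (HN : INR (S i) <> 0) by (apply not_0_INR; lia).
  apply (isd_ext (fun s => (c / INR (S i) * y ^ j) * s ^ (S i))); [intros; ring|].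
  replace (c * s ^ i * y ^ j) with ((c / INR (S i) * y ^ j) * (INR (S i) * 1 * s ^ (pred (S i)))).
  2:{ simpl pred. field; auto. }
  apply is_derive_scal. apply (is_derive_pow (fun t => t)). apply (is_derive_id s).
Qed.

Lemma ML_antider n m g : ML (box n m) g -> exists G, ML (box (S n) m) G /\
  (forall y, G (0, y) = 0) /\ forall s y, is_derive (fun s => G (s, y)) s (g (s, y)).
Proof.
  intros [l [Hl E]].
  exists (fun z => ev (map (fun mm => match mm with (c, i, j) => (c / INR (S i), S i, j) end) l) (fst z) (snd z)).
  split; [|split].
  - eexists; split; [|intros; reflexivity]. clear E. revert Hl.
    induction l as [|[[c i] j] t IH]; simpl; auto. unfold box in *. intros [? ?]; split; auto. lia.
  - intros y; simpl. clear. induction l as [|[[c i] j] t IH]; simpl; auto. rewrite IH; ring.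
  - intros s y. eapply is_derive_ext with (f := fun s => ev (map _ l) s y). { intros; reflexivity. }
    rewrite E. clear E Hl. induction l as [|[[c i] j] t IH]; simpl.
    + apply (is_derive_const 0 s).
    + apply isd_plus; auto. apply antider_mon.
Qed.

Lemma cont_pow n x : continuous (fun t : R => t ^ n) x.
Proof. apply (ex_derive_continuous (fun t : R => t ^ n)). auto_derive; auto. Qed.

Lemma RInt_pow n : is_RInt (fun t => t ^ n) 0 1 (/ INR (S n)).
Proof.
  assert (HS : INR (S n) <> 0) by (apply not_0_INR; lia).
  replace (/ INR (S n)) with (minus ((fun t => t ^ S n / INR (S n)) 1) ((fun t => t ^ S n / INR (S n)) 0)).
  2:{ simpl. rewrite pow1, Rmult_0_l. unfold minus, plus, opp; simpl. field; auto. }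
  apply (is_RInt_derive (fun t => t ^ S n / INR (S n)) (fun t => t ^ n)).
  - intros x _. apply (isd_ext (fun t => / INR (S n) * t ^ S n)); [intros; field; auto|].
    replace (x ^ n) with (/ INR (S n) * (INR (S n) * 1 * x ^ (pred (S n)))) by (simpl pred; field; auto).
    apply is_derive_scal. apply (is_derive_pow (fun t => t)). apply (is_derive_id x).
  - intros x _. apply cont_pow.
Qed.

Lemma isR_ext (f g : R -> R) a b (v w : R) : (forall t, f t = g t) -> v = w -> is_RInt f a b v -> is_RInt g a b w.
Proof. intros H Hv Hf; subst. apply (is_RInt_ext f); auto. Qed.
Lemma isR_scal (f : R -> R) a b (v k : R) : is_RInt f a b v -> is_RInt (fun t => k * f t) a b (k * v).
Proof. intros H. apply (is_RInt_scal f a b k v H). Qed.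
Lemma isR_plus (f g : R -> R) a b (v w : R) : is_RInt f a b v -> is_RInt g a b w ->
  is_RInt (fun t => f t + g t) a b (v + w).
Proof. intros H1 H2. apply (is_RInt_plus f g a b v w H1 H2). Qed.

Definition Ul (l : list (R * nat * nat)) :=
  map (fun mm => match mm with (c, i, j) => (c * / INR (S (i + j + 1)), i, j) end) l.

Lemma ev_RInt l K x y :
  is_RInt (fun t => t * K * ev l (t * x) (t * y)) 0 1 (K * ev (Ul l) x y).
Proof.
  induction l as [|[[c i] j] t IH].
  - simpl. apply (isR_ext (fun t => 0 * t ^ 0) _ _ _ (0 * / INR 1)); [intros; ring|ring|].
    apply isR_scal, RInt_pow.
  - apply (isR_ext (fun s => (K * c * x ^ i * y ^ j) * s ^ (i + j + 1) + s * K * ev t (s * x) (s * y))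
      _ _ _ ((K * c * x ^ i * y ^ j) * / INR (S (i + j + 1)) + K * ev (Ul t) x y)).
    + intros s. simpl. rewrite !Rpow_mult_distr, !pow_add. simpl. ring.
    + change (ev (Ul ((c, i, j) :: t)) x y) with (c * / INR (S (i + j + 1)) * x ^ i * y ^ j + ev (Ul t) x y).
      ring.
    + apply isR_plus; auto. apply isR_scal, RInt_pow.
Qed.

Lemma ML_poincare P u : ML P u -> exists U, ML P U /\ forall x, poincare u x = (- snd x * U x, fst x * U x).
Proof.
  intros [l [Hl E]]. exists (fun z => ev (Ul l) (fst z) (snd z)). split.
  - eexists; split; [|intros; reflexivity]. clear E. revert Hl.
    induction l as [|[[c i] j] t IH]; simpl; tauto.
  - intros [x y]; unfold poincare; simpl. f_equal.
    + apply is_RInt_unique. apply (isR_ext (fun t => t * (- y) * ev l (t * x) (t * y)) _ _ _ (- y * ev (Ul l) x y)).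
      * intros; rewrite E; auto.
      * auto.
      * apply ev_RInt.
    + apply is_RInt_unique. apply (isR_ext (fun t => t * x * ev l (t * x) (t * y)) _ _ _ (x * ev (Ul l) x y)).
      * intros; rewrite E; auto.
      * auto.
      * apply ev_RInt.
Qed.

Definition cross (p q : pt) : R := fst p * (snd q - snd p) - snd p * (fst q - fst p).

Lemma edge_lemma u U P phi p q G al be :
  (forall x, poincare u x = (- snd x * U x, fst x * U x)) -> ML P phi ->
  (forall s, is_derive G s (cross p q * U (seg_pt p q s))) ->
  (forall s, phi (seg_pt p q s) = al + be * s + G s) ->
  tangential_const_on_edge (vfsub (poincare u) (grad phi)) (p, q).
Proof.
  intros HU Hphi HG Hrep.
  set (L := sqrt ((fst q - fst p) ^ 2 + (snd q - snd p) ^ 2)).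
  exists (- be * / L). intros s _.
  unfold vfsub, grad, dot, unit_tangent. rewrite HU. cbn [fst snd]. fold L.
  unfold seg_pt; cbn [fst snd].
  pose proof (ML_chain P phi Hphi (fst p) (snd p) (fst q - fst p) (snd q - snd p) s) as HC.
  assert (H2 : is_derive (fun s => phi (fst p + s * (fst q - fst p), snd p + s * (snd q - snd p))) s
                 (0 + be * 1 + cross p q * U (seg_pt p q s))).
  { apply (isd_ext (fun s => al + be * s + G s)).
    - intros t; rewrite <- Hrep; reflexivity.
    - apply isd_plus; auto. apply isd_plus. apply (is_derive_const al s).
      apply is_derive_scal. apply (is_derive_id s). }
  apply is_derive_unique in HC. apply is_derive_unique in H2. rewrite HC in H2. clear HC.
  unfold seg_pt in H2; cbn [fst snd] in H2.
  set (X1 := fst p + s * (fst q - fst p)) in *.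
  set (X2 := snd p + s * (snd q - snd p)) in *.
  set (D1 := Derive (fun t => phi (t, X2)) X1) in *.
  set (D2 := Derive (fun t => phi (X1, t)) X2) in *.
  set (UU := U (X1, X2)) in *.
  unfold cross in H2. unfold Rdiv.
  transitivity (((- X2 * (fst q - fst p) + X1 * (snd q - snd p)) * UU
      - ((fst q - fst p) * D1 + (snd q - snd p) * D2)) * / L); [ring|].
  rewrite H2. unfold X1, X2. ring.
Qed.

Fixpoint hev (N : nat) (l : list (R * nat * nat)) (a b : R) : R :=
  match l with nil => 0 | (c, i, j) :: t => c * b ^ i * (a + b) ^ (N - i) + hev N t a b end.

Lemma hom_lemma N H : ML (box N 0) H -> exists Hh, ML (tot N) Hh /\
  (forall s, Hh (1 - s, s) = H (s, 0)) /\
  (forall b, Hh (0, b) = b ^ N * H (1, 0)) /\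
  (forall a, Hh (a, 0) = a ^ N * H (0, 0)).
Proof.
  intros [l [Hl E]]. exists (fun z => hev N l (fst z) (snd z)).
  unfold box in Hl. split; [|split; [|split]]; cbn [fst snd].
  - clear E. induction l as [|[[c i] j] t IH]; simpl in *.
    + apply ML_zero.
    + destruct Hl as [[Hi Hj] Ht]. apply ML_add; auto.
      apply ML_ext with (f := fun z => c * ((fun z => (fun z => 1 * snd z) z ^ i) z *
                 (fun z => (fun z => 1 * fst z + 1 * snd z) z ^ (N - i)) z)).
      { intros; simpl; rewrite !Rmult_1_l; ring. }
      apply ML_scale. apply (ML_mul (tot i) (tot (N - i))).
      * unfold tot; intros; lia.
      * apply ML_pow_tot. apply (ML_x2 (tot 1) 1). unfold tot; lia.
      * apply ML_pow_tot. apply (ML_add _ (fun z => 1 * fst z) (fun z => 1 * snd z)).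
        apply ML_x1; unfold tot; lia. apply ML_x2; unfold tot; lia.
  - intros s. rewrite !E. clear E. induction l as [|[[c i] j] t IH]; simpl in *; auto.
    destruct Hl as [[Hi Hj] Ht]. assert (j = 0%nat) by lia; subst.
    rewrite IH by auto. replace (1 - s + s) with 1 by ring. rewrite pow1. ring.
  - intros b. rewrite !E. clear E. induction l as [|[[c i] j] t IH]; simpl in *; [ring|].
    destruct Hl as [[Hi Hj] Ht]. assert (j = 0%nat) by lia; subst.
    rewrite IH by auto. replace (0 + b) with b by ring. rewrite pow1.
    replace (c * b ^ i * b ^ (N - i)) with (c * b ^ N). ring.
    replace N with (i + (N - i))%nat at 1 by lia. rewrite pow_add; ring.
  - intros a. rewrite !E. clear E. induction l as [|[[c i] j] t IH]; simpl in *; [ring|].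
    destruct Hl as [[Hi Hj] Ht]. assert (j = 0%nat) by lia; subst.
    rewrite IH by auto. replace (a + 0) with a by ring.
    destruct i; simpl.
    + rewrite Nat.sub_0_r. ring.
    + ring.
Qed.

Lemma edge_G k U p q :
  ML (box k 0) (fun z => cross p q * U (seg_pt p q (fst z))) ->
  exists G0, ML (box (S k) 0) G0 /\ G0 (0, 0) = 0 /\
    forall s, is_derive (fun s => G0 (s, 0)) s (cross p q * U (seg_pt p q s)).
Proof.
  intros H. destruct (ML_antider _ _ _ H) as [G0 [H1 [H2 H3]]].
  exists G0; split; auto.
Qed.

Lemma ML_affine1 P c d : P 0%nat 0%nat -> P 1%nat 0%nat -> ML P (fun z => c + fst z * d).
Proof.
  intros H0 H1. apply ML_ext with (f := fun z => c + d * fst z). { intros; simpl; ring. }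
  apply ML_add; [apply ML_const | apply ML_x1]; auto.
Qed.

Lemma tri_g k U p q : ML (tot k) U ->
  ML (box k 0) (fun z => cross p q * U (seg_pt p q (fst z))).
Proof.
  intros HU. apply ML_scale. unfold seg_pt.
  apply (ML_comp_box (tot k) U (fun z => fst p + fst z * (fst q - fst p))
                              (fun z => snd p + fst z * (snd q - snd p)) 1 0 1 0); auto.
  - apply ML_affine1; unfold box; lia.
  - apply ML_affine1; unfold box; lia.
  - unfold tot; intros; lia.
Qed.

Lemma rect_g k U p q : ML (box k k) U -> (snd q = snd p \/ fst q = fst p) ->
  ML (box k 0) (fun z => cross p q * U (seg_pt p q (fst z))).
Proof.
  intros HU [Hh | Hv]; apply ML_scale; unfold seg_pt.
  - apply ML_ext with (f := fun z => U ((fun z => fst p + fst z * (fst q - fst p)) z,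
                                        (fun _ => snd p) z)).
    { intros; simpl. rewrite Hh. f_equal. f_equal. ring. }
    apply (ML_comp_box (box k k) U _ _ 1 0 0 0); auto.
    + apply ML_affine1; unfold box; lia.
    + apply ML_const; unfold box; lia.
    + unfold box; intros; lia.
  - apply ML_ext with (f := fun z => U ((fun _ => fst p) z,
                                        (fun z => snd p + fst z * (snd q - snd p)) z)).
    { intros; simpl. rewrite Hv. f_equal. f_equal. ring. }
    apply (ML_comp_box (box k k) U _ _ 0 0 1 0); auto.
    + apply ML_const; unfold box; lia.
    + apply ML_affine1; unfold box; lia.
    + unfold box; intros; lia.
Qed.

Lemma tri_data k U p q : ML (tot k) U ->
  exists Hh G, ML (tot (S k)) Hh /\
    (forall s, is_derive G s (cross p q * U (seg_pt p q s))) /\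
    (forall s, Hh (1 - s, s) = G s - s * G 1) /\
    (forall b, Hh (0, b) = 0) /\ (forall a, Hh (a, 0) = 0).
Proof.
  intros HU. destruct (edge_G k U p q (tri_g k U p q HU)) as [G0 [HG0 [HG00 HGd]]].
  assert (HH : ML (box (S k) 0) (fun z => G0 z + - G0 (1, 0) * fst z)).
  { apply ML_add; auto. apply ML_x1. unfold box; lia. }
  destruct (hom_lemma _ _ HH) as [Hh [HM [E1 [E2 E3]]]].
  exists Hh, (fun s => G0 (s, 0)). split; [auto|split; [|split; [|split]]].
  - exact HGd.
  - intros s; rewrite E1; simpl; ring.
  - intros b; rewrite E2; simpl; ring.
  - intros a; rewrite E3; simpl; rewrite HG00; ring.
Qed.

Definition lamb (a b c : pt) (x : pt) : R :=
  ((fst x - fst a) * (snd c - snd a) - (snd x - snd a) * (fst c - fst a)) /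
  ((fst b - fst a) * (snd c - snd a) - (snd b - snd a) * (fst c - fst a)).
Definition lamc (a b c : pt) (x : pt) : R :=
  ((fst b - fst a) * (snd x - snd a) - (snd b - snd a) * (fst x - fst a)) /
  ((fst b - fst a) * (snd c - snd a) - (snd b - snd a) * (fst c - fst a)).
Definition lama (a b c : pt) (x : pt) : R := 1 - lamb a b c x - lamc a b c x.

Lemma lam_ML a b c : nondegenerate_triangle a b c ->
  ML (tot 1) (lama a b c) /\ ML (tot 1) (lamb a b c) /\ ML (tot 1) (lamc a b c).
Proof.
  unfold nondegenerate_triangle. intros HD.
  set (D := (fst b - fst a) * (snd c - snd a) - (snd b - snd a) * (fst c - fst a)) in *.
  assert (Hb : ML (tot 1) (lamb a b c)).
  { apply ML_ext with (f := fun z => ((- fst a * (snd c - snd a) + snd a * (fst c - fst a)) / D + ((snd c - snd a) / D) * fst z) + (- (fst c - fst a) / D) * snd z).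
    { intros; unfold lamb; simpl; fold D; field; auto. }
    apply ML_add; [apply ML_add|]; [apply ML_const|apply ML_x1|apply ML_x2]; unfold tot; lia. }
  assert (Hc : ML (tot 1) (lamc a b c)).
  { apply ML_ext with (f := fun z => ((- (fst b - fst a) * snd a + (snd b - snd a) * fst a) / D + (- (snd b - snd a) / D) * fst z) + ((fst b - fst a) / D) * snd z).
    { intros; unfold lamc; simpl; fold D; field; auto. }
    apply ML_add; [apply ML_add|]; [apply ML_const|apply ML_x1|apply ML_x2]; unfold tot; lia. }
  split; auto. unfold lama.
  apply ML_ext with (f := fun z => (1 + (-1) * lamb a b c z) + (-1) * lamc a b c z). { intros; simpl; ring. }
  apply ML_add; [apply ML_add|]; [apply ML_const; unfold tot; lia | apply ML_scale; auto | apply ML_scale; auto].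
Qed.

Lemma lam_ab a b c s : nondegenerate_triangle a b c ->
  lama a b c (seg_pt a b s) = 1 - s /\ lamb a b c (seg_pt a b s) = s /\ lamc a b c (seg_pt a b s) = 0.
Proof.
  unfold nondegenerate_triangle, lama, lamb, lamc, seg_pt; simpl; intros HD.
  repeat split; field; auto.
Qed.
Lemma lam_bc a b c s : nondegenerate_triangle a b c ->
  lama a b c (seg_pt b c s) = 0 /\ lamb a b c (seg_pt b c s) = 1 - s /\ lamc a b c (seg_pt b c s) = s.
Proof.
  unfold nondegenerate_triangle, lama, lamb, lamc, seg_pt; simpl; intros HD.
  repeat split; field; auto.
Qed.
Lemma lam_ca a b c s : nondegenerate_triangle a b c ->
  lama a b c (seg_pt c a s) = s /\ lamb a b c (seg_pt c a s) = 0 /\ lamc a b c (seg_pt c a s) = 1 - s.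
Proof.
  unfold nondegenerate_triangle, lama, lamb, lamc, seg_pt; simpl; intros HD.
  repeat split; field; auto.
Qed.

Lemma triangle_part k a b c : nondegenerate_triangle a b c ->
  forall u : pt -> R, inP k u ->
  exists phi : pt -> R, inP (S k) phi /\
    forall e, In e (triangle_edges a b c) ->
      tangential_const_on_edge (vfsub (poincare u) (grad phi)) e.
Proof.
  intros HD u Hu. apply inP_ML in Hu.
  destruct (ML_poincare _ _ Hu) as [U [HU EU]].
  destruct (tri_data k U a b HU) as [H1 [G1 [M1 [D1 [T1 [Z1 W1]]]]]].
  destruct (tri_data k U b c HU) as [H2 [G2 [M2 [D2 [T2 [Z2 W2]]]]]].
  destruct (tri_data k U c a HU) as [H3 [G3 [M3 [D3 [T3 [Z3 W3]]]]]].
  destruct (lam_ML a b c HD) as [La [Lb Lc]].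
  set (phi := fun z => H1 (lama a b c z, lamb a b c z) + H2 (lamb a b c z, lamc a b c z)
                     + H3 (lamc a b c z, lama a b c z)).
  assert (Hphi : ML (tot (S k)) phi).
  { unfold phi. apply ML_add; [apply ML_add|];
    eapply ML_comp_tot; eauto; unfold tot; intros; lia. }
  exists phi. split. { apply ML_inP; auto. }
  intros e He. simpl in He. destruct He as [<- | [<- | [<- | []]]].
  - apply (edge_lemma u U _ phi a b G1 0 (- G1 1) EU Hphi D1).
    intros s. destruct (lam_ab a b c s HD) as [E1 [E2 E3]].
    unfold phi. rewrite E1, E2, E3, T1, W2, Z3. ring.
  - apply (edge_lemma u U _ phi b c G2 0 (- G2 1) EU Hphi D2).
    intros s. destruct (lam_bc a b c s HD) as [E1 [E2 E3]].
    unfold phi. rewrite E1, E2, E3, T2, Z1, W3. ring.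
  - apply (edge_lemma u U _ phi c a G3 0 (- G3 1) EU Hphi D3).
    intros s. destruct (lam_ca a b c s HD) as [E1 [E2 E3]].
    unfold phi. rewrite E1, E2, E3, T3, Z2, W1. ring.
Qed.

Lemma rect_data k U p q : ML (box k k) U -> (snd q = snd p \/ fst q = fst p) ->
  exists G0, ML (box (S k) 0) G0 /\
    forall s, is_derive (fun s => G0 (s, 0)) s (cross p q * U (seg_pt p q s)).
Proof.
  intros HU Hpq. destruct (edge_G k U p q (rect_g k U p q HU Hpq)) as [G0 [H1 [_ H3]]].
  exists G0; auto.
Qed.

Definition xi (x0 x1 : R) (z : pt) : R := (fst z - x0) / (x1 - x0).

Lemma ML_xi P x0 x1 : P 0%nat 0%nat -> P 1%nat 0%nat -> x0 < x1 -> ML P (xi x0 x1).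
Proof.
  intros H0 H1 Hx. apply ML_ext with (f := fun z => - x0 / (x1 - x0) + fst z * / (x1 - x0)).
  { intros; unfold xi; simpl; field; lra. }
  apply ML_affine1; auto.
Qed.

Definition eta (y0 y1 : R) (z : pt) : R := (snd z - y0) / (y1 - y0).

Lemma ML_eta P y0 y1 : P 0%nat 0%nat -> P 0%nat 1%nat -> y0 < y1 -> ML P (eta y0 y1).
Proof.
  intros H0 H1 Hx. apply ML_ext with (f := fun z => - y0 / (y1 - y0) + / (y1 - y0) * snd z).
  { intros; unfold eta; simpl; field; lra. }
  apply ML_add; [apply ML_const | apply ML_x2]; auto.
Qed.

Lemma rectangle_part k : (1 <= k)%nat -> forall x0 x1 y0 y1 : R, x0 < x1 -> y0 < y1 ->
  forall u : pt -> R, inQ k u ->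
  exists phi : pt -> R, inQ (S k) phi /\
    forall e, In e (rectangle_edges x0 x1 y0 y1) ->
      tangential_const_on_edge (vfsub (poincare u) (grad phi)) e.
Proof.
  intros Hk x0 x1 y0 y1 Hx Hy u Hu. apply inQ_ML in Hu.
  destruct (ML_poincare _ _ Hu) as [U [HU EU]].
  destruct (rect_data k U (x0, y0) (x1, y0) HU (or_introl eq_refl)) as [G1 [M1 D1]].
  destruct (rect_data k U (x1, y0) (x1, y1) HU (or_intror eq_refl)) as [G2 [M2 D2]].
  destruct (rect_data k U (x1, y1) (x0, y1) HU (or_introl eq_refl)) as [G3 [M3 D3]].
  destruct (rect_data k U (x0, y1) (x0, y0) HU (or_intror eq_refl)) as [G4 [M4 D4]].
  set (X := xi x0 x1). set (Y := eta y0 y1).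
  set (phi := fun z => G1 (X z, 0) * (1 - Y z) + G2 (Y z, 0) * X z
                     + G3 (1 - X z, 0) * Y z + G4 (1 - Y z, 0) * (1 - X z)).
  assert (HX : forall P, P 0%nat 0%nat -> P 1%nat 0%nat -> ML P X) by (intros; apply ML_xi; auto).
  assert (HY : forall P, P 0%nat 0%nat -> P 0%nat 1%nat -> ML P Y) by (intros; apply ML_eta; auto).
  assert (H1X : forall P, P 0%nat 0%nat -> P 1%nat 0%nat -> ML P (fun z => 1 - X z)).
  { intros P ? ?. apply ML_ext with (f := fun z => 1 + (-1) * X z). { intros; simpl; ring. }
    apply ML_add; [apply ML_const | apply ML_scale]; auto. }
  assert (H1Y : forall P, P 0%nat 0%nat -> P 0%nat 1%nat -> ML P (fun z => 1 - Y z)).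
  { intros P ? ?. apply ML_ext with (f := fun z => 1 + (-1) * Y z). { intros; simpl; ring. }
    apply ML_add; [apply ML_const | apply ML_scale]; auto. }
  assert (Z0 : ML (box 0 0) (fun _ => 0)) by (apply ML_const; unfold box; lia).
  assert (Hphi : ML (box (S k) (S k)) phi).
  { unfold phi. repeat apply ML_add.
    - apply (ML_mul (box (S k) 0) (box 0 1)); [unfold box; intros; lia| |apply H1Y; unfold box; lia].
      apply (ML_comp_box (box (S k) 0) G1 X (fun _ => 0) 1 0 0 0); auto.
      apply HX; unfold box; lia. unfold box; intros; lia.
    - apply (ML_mul (box 0 (S k)) (box 1 0)); [unfold box; intros; lia| |apply HX; unfold box; lia].
      apply (ML_comp_box (box (S k) 0) G2 Y (fun _ => 0) 0 1 0 0); auto.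
      apply HY; unfold box; lia. unfold box; intros; lia.
    - apply (ML_mul (box (S k) 0) (box 0 1)); [unfold box; intros; lia| |apply HY; unfold box; lia].
      apply (ML_comp_box (box (S k) 0) G3 (fun z => 1 - X z) (fun _ => 0) 1 0 0 0); auto.
      apply H1X; unfold box; lia. unfold box; intros; lia.
    - apply (ML_mul (box 0 (S k)) (box 1 0)); [unfold box; intros; lia| |apply H1X; unfold box; lia].
      apply (ML_comp_box (box (S k) 0) G4 (fun z => 1 - Y z) (fun _ => 0) 0 1 0 0); auto.
      apply H1Y; unfold box; lia. unfold box; intros; lia. }
  exists phi. split. { apply ML_inQ; auto. }
  assert (Ex : x1 - x0 <> 0) by lra. assert (Ey : y1 - y0 <> 0) by lra.
  intros e He. simpl in He. destruct He as [<- | [<- | [<- | [<- | []]]]].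
  - apply (edge_lemma u U _ phi _ _ (fun s : R => G1 (s, 0)) (G4 (1, 0)) (G2 (0, 0) - G4 (1, 0)) EU Hphi D1).
    intros s. unfold phi.
    replace (X (seg_pt (x0, y0) (x1, y0) s)) with s by (unfold X, xi, seg_pt; simpl; field; auto).
    replace (Y (seg_pt (x0, y0) (x1, y0) s)) with 0 by (unfold Y, eta, seg_pt; simpl; field; auto).
    replace (1 - 0) with 1 by ring. cbv beta. ring.
  - apply (edge_lemma u U _ phi _ _ (fun s : R => G2 (s, 0)) (G1 (1, 0)) (G3 (0, 0) - G1 (1, 0)) EU Hphi D2).
    intros s. unfold phi.
    replace (X (seg_pt (x1, y0) (x1, y1) s)) with 1 by (unfold X, xi, seg_pt; simpl; field; auto).
    replace (Y (seg_pt (x1, y0) (x1, y1) s)) with s by (unfold Y, eta, seg_pt; simpl; field; auto).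
    replace (1 - 1) with 0 by ring. cbv beta. ring.
  - apply (edge_lemma u U _ phi _ _ (fun s : R => G3 (s, 0)) (G2 (1, 0)) (G4 (0, 0) - G2 (1, 0)) EU Hphi D3).
    intros s. unfold phi.
    replace (X (seg_pt (x1, y1) (x0, y1) s)) with (1 - s) by (unfold X, xi, seg_pt; simpl; field; auto).
    replace (Y (seg_pt (x1, y1) (x0, y1) s)) with 1 by (unfold Y, eta, seg_pt; simpl; field; auto).
    replace (1 - (1 - s)) with s by ring. replace (1 - 1) with 0 by ring. cbv beta. ring.
  - apply (edge_lemma u U _ phi _ _ (fun s : R => G4 (s, 0)) (G3 (1, 0)) (G1 (0, 0) - G3 (1, 0)) EU Hphi D4).
    intros s. unfold phi.
    replace (X (seg_pt (x0, y1) (x0, y0) s)) with 0 by (unfold X, xi, seg_pt; simpl; field; auto).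
    replace (Y (seg_pt (x0, y1) (x0, y0) s)) with (1 - s) by (unfold Y, eta, seg_pt; simpl; field; auto).
    replace (1 - (1 - s)) with s by ring. replace (1 - 0) with 1 by ring. cbv beta. ring.
Qed.

Theorem mainTheorem1 :
  forall k : nat, (1 <= k)%nat ->
  (forall a b c : pt, nondegenerate_triangle a b c ->
     forall u : pt -> R, inP k u ->
     exists phi : pt -> R, inP (S k) phi /\
       forall e, In e (triangle_edges a b c) ->
         tangential_const_on_edge (vfsub (poincare u) (grad phi)) e) /\
  (forall x0 x1 y0 y1 : R, x0 < x1 -> y0 < y1 ->
     forall u : pt -> R, inQ k u ->
     exists phi : pt -> R, inQ (S k) phi /\
       forall e, In e (rectangle_edges x0 x1 y0 y1) ->
         tangential_const_on_edge (vfsub (poincare u) (grad phi)) e).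
Proof.
  intros k Hk. split.
  - intros a b c HD. apply triangle_part; auto.
  - apply rectangle_part; auto.
Qed.
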